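(* Let $c=0.24$ and let $N=(2+c)n$, where $n$ is sufficiently large. Then there exist families $\mathcal S$ and $\mathcal T$ of subsets of $[N]=\{1,\dots,N\}$ such that: (i) $|S|=(1-c)n$ for every $S\in\mathcal S$, and $|T|=(1+2c)n$ for every $T\in\mathcal T$; (ii) every $S\in\mathcal S$ and $T\in\mathcal T$ are incomparable (neither $S\subseteq T$ nor $T\subseteq S$); (iii) for every pair of disjoint $A,B\subseteq[N]$ with $|A|=n/2$ and $|B|=n$, there is $S\in\mathcal S$ with $S\subseteq A\cup B$ and $|B\cap S|\le n/2$; (iv) for every pair of disjoint $A,B\subseteq[N]$ with $|A|=n/2$ and $|B|=n$, there is $T\in\mathcal T$ with $T\supseteq [N]\setminus(A\cup B)$ and $|B\setminus T|\le n/2$.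
   Context: As in the paper, quantities such as $(2+c)n$, $(1-c)n$, $(1+2c)n$, $cn$ and $n/2$ are treated as integers (rounding is ignored). *)

(* Defs.v *)
(* c = 0.24 = 6/25.  Since the paper treats (2+c)n, (1-c)n,
   (1+2c)n and n/2 as integers, we take n = 50*m (the smallest modulus making
   all of them integers); then
     N = (2+c)n = 112 m,  (1-c)n = 38 m,  (1+2c)n = 74 m,  n/2 = 25 m,  n = 50 m. *)
From mathcomp Require Import all_boot.
Set Implicit Arguments. Unset Strict Implicit. Unset Printing Implicit Defensive.

Definition nn (m : nat) : nat := 50 * m.
Definition NN (m : nat) : nat := 112 * m.
Definition Ssize (m : nat) : nat := 38 * m.
Definition Tsize (m : nat) : nat := 74 * m.
Definition halfn (m : nat) : nat := 25 * m.

(* Main.v *)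
Require Import Defs.
From mathcomp Require Import all_boot.
From mathcomp Require Import all_order all_algebra zify.
From mathcomp Require Import ring lra.
From mathcomp Require Import reals Rstruct.
From mathcomp.analysis Require Import sequences exp.
Set Implicit Arguments. Unset Strict Implicit. Unset Printing Implicit Defensive.

Module NatPart.

Lemma binU n k : k <= n -> 'C(n,k) * (k^k * (n-k)^(n-k)) <= n^n.
Proof.
move=> kn; have := expnDn (n-k) k n; rewrite subnK // => ->.
have kn1 : k < n.+1 by rewrite ltnS.
rewrite (bigD1 (Ordinal kn1)) //= [k^k * _]mulnC; exact: leq_addr.
Qed.

Section BinL.
Variables n k : nat.
Hypothesis kn : k <= n.
Let t i := 'C(n,i) * ((n-k)^(n-i) * k^i).

Let step i : i < n -> t i.+1 * (i.+1 * (n-k)) = t i * ((n-i)*k).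
Proof.
move=> lt; rewrite /t.
have e1 := mul_bin_left n i.
have e2 : (n-k)^(n-i) = (n-k)^(n-i.+1) * (n-k) by rewrite -expnSr subnSK.
rewrite e2 expnSr.
transitivity ((i.+1 * 'C(n, i.+1)) * ((n - k) ^ (n - i.+1) * (n-k)) * k ^ i * k).
  by rewrite !mulnA; lia.
rewrite e1; lia.
Qed.

Let up j : k + j <= n -> t (k + j) <= t k.
Proof.
elim: j => [|j IH]; first by rewrite addn0.
move=> h; have h' : k + j <= n by lia.
apply: leq_trans (IH h').
have lt : k + j < n by lia.
have := step lt; rewrite -addnS => e.
have pos : 0 < (k + j.+1) * (n-k) by rewrite muln_gt0; apply/andP; split; lia.
rewrite -(leq_pmul2r pos) e leq_mul2l; apply/orP; right; nia.
Qed.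

Let down j : j <= k -> t (k - j) <= t k.
Proof.
elim: j => [|j IH]; first by rewrite subn0.
move=> h; have h' : j <= k by lia.
apply: leq_trans (IH h').
have lt : k - j.+1 < n by apply: leq_trans kn; lia.
have := step lt; have -> : (k - j.+1).+1 = k - j by lia.
move=> e.
case: (posnP (n - k)) => [nk0|nkp].
  rewrite /t; have -> : n - (k - j.+1) = (n - (k - j.+1) - 1).+1 by lia.
  by rewrite nk0 exp0n ?muln0 ?mul0n.
rewrite -(leq_pmul2r (_ : 0 < (k - j) * (n-k))); last by rewrite muln_gt0 nkp; lia.
rewrite e leq_mul2l; apply/orP; right; nia.
Qed.

Lemma binL_aux : n^n <= n.+1 * ('C(n,k) * (k^k * (n-k)^(n-k))).
Proof.
have := expnDn (n-k) k n; rewrite subnK // => ->.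
have -> : 'C(n,k) * (k^k * (n-k)^(n-k)) = t k by rewrite /t mulnC [k^k * _]mulnC mulnC.
rewrite -[n.+1 in X in _ <= X]card_ord -sum_nat_const.
apply: leq_sum => i _; rewrite -/(t i).
case: (leqP k i) => h.
  have := up (j := i - k); rewrite subnKC //; apply; rewrite -ltnS; exact: ltn_ord.
have := down (j := k - i); rewrite subKn ?(ltnW h) //; apply; exact: leq_subr.
Qed.
End BinL.
Lemma combine K D C1 C2 p1 p2 a13 a12 a25 a50 a38 a36 a74 :
  0 < p1 * p2 * a13 * a12 * a25 * a25 * a38 * a36 ->
  a25 <= p1 * C1 * a13 * a12 -> a50 <= p2 * C2 * a25 * a25 -> D * a38 * a36 <= a74 ->
  K * p1 * p2 * (a74 * a13 * a12 * a25 * a25) <= a25 * a50 * a38 * a36 ->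
  K * D <= C1 * C2.
Proof.
move=> Y h1 h2 h3 hP.
rewrite -(leq_pmul2r Y).
apply: (@leq_trans (K * p1 * p2 * a13 * a12 * a25 * a25 * (D * a38 * a36))).
  by rewrite !mulnA; lia.
apply: (@leq_trans (K * p1 * p2 * a13 * a12 * a25 * a25 * a74)).
  by rewrite leq_mul2l h3 orbT.
apply: (@leq_trans (a25 * a50 * a38 * a36)).
  by apply: leq_trans hP; lia.
apply: (@leq_trans ((p1 * C1 * a13 * a12) * (p2 * C2 * a25 * a25) * a38 * a36)).
  by do 3 (apply: leq_mul => //).
lia.
Qed.

Lemma powcm c e m : (c* m)^(e* m) = (c^e)^m * (m^m)^e.
Proof. by rewrite expnMn -!expnM [m * e]mulnC. Qed.

Lemma pow2_poly m : 40 <= m -> 16*(112* m+1)*(25* m).+1*(50* m).+1 <= 2^m.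
Proof.
move=> h; rewrite -(subnKC h); elim: (m - 40) => [|j IH]; first by lia.
rewrite addnS expnS; move: (2 ^ (40 + j)) IH => x IH; nia.
Qed.

Lemma cancelX a b X e : 0 < X -> a * X ^ e <= b * X ^ e -> a <= b.
Proof. by move=> X0; rewrite leq_pmul2r // expn_gt0 X0. Qed.


Lemma hcL : 2 * (74^74 * 13^13 * 12^12 * 25^25 * 25^25) <= 25^25 * 50^50 * 38^38 * 36^36.
Proof. lia. Qed.

Lemma hPL_abs m K q1 q2 q3 q4 q5 r1 r2 r3 r4 :
  2 * (q1 * q2 * q3 * q4 * q5) <= r1 * r2 * r3 * r4 -> K <= 2^m ->
  K * (q1^m * q2^m * q3^m * q4^m * q5^m) <= r1^m * r2^m * r3^m * r4^m.
Proof.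
move=> hc hp.
rewrite -!expnMn.
apply: (@leq_trans (2^m * (q1 * q2 * q3 * q4 * q5)^m)).
  by rewrite leq_mul2r hp orbT.
rewrite -expnMn; case: m {hp} => [|m]; first by rewrite !expn0.
by rewrite leq_exp2r.
Qed.

Lemma hPL m : 40 <= m -> 16 * (112* m+1) * (25* m).+1 * (50* m).+1 *
   ((74^74)^m * (13^13)^m * (12^12)^m * (25^25)^m * (25^25)^m)
   <= (25^25)^m * (50^50)^m * (38^38)^m * (36^36)^m.
Proof.
move=> hm; exact: (hPL_abs hcL (pow2_poly hm)).
Qed.

Lemma combine2 K D C1 C2 p1 p2 a13 a12 a25 a50 a38 a36 a74 X :
 0 < X -> 0 < p1 -> 0 < p2 -> 0 < a13 -> 0 < a12 -> 0 < a25 -> 0 < a38 -> 0 < a36 ->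
 a25 * X^25 <= p1 * (C1 * (a13 * X^13 * (a12 * X^12))) ->
 a50 * X^50 <= p2 * (C2 * (a25 * X^25 * (a25 * X^25))) ->
 D * (a38 * X^38 * (a36 * X^36)) <= a74 * X^74 ->
 K * p1 * p2 * (a74 * a13 * a12 * a25 * a25) <= a25 * a50 * a38 * a36 ->
 K * D <= C1 * C2.
Proof.
move=> X0 q1 q2 q13 q12 q25 q38 q36 h1 h2 h3 hP.
have e25 : X^25 = X^13 * X^12 by rewrite -expnD.
have e50 : X^50 = X^25 * X^25 by rewrite -expnD.
have e74 : X^74 = X^38 * X^36 by rewrite -expnD.
have c25 := @cancelX a25 (p1 * C1 * a13 * a12) X 25 X0.
have c50 := @cancelX a50 (p2 * C2 * a25 * a25) X 50 X0.
have c74 := @cancelX (D * a38 * a36) a74 X 74 X0.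
move: (X^13) (X^12) (X^25) (X^38) (X^36) (X^50) (X^74) e25 e50 e74 h1 h2 h3 c25 c50 c74
  => x13 x12 x25 x38 x36 x50 x74 e25 e50 e74 h1 h2 h3 c25 c50 c74.
apply: (combine (p1 := p1) (p2 := p2) (a13 := a13) (a12 := a12) (a25 := a25) (a50 := a50)
   (a38 := a38) (a36 := a36) (a74 := a74)) => //.
- by rewrite !muln_gt0 q1 q2 q13 q12 q25 q38 q36.
- apply: c25; apply: leq_trans h1 _; rewrite e25; lia.
- apply: c50; apply: leq_trans h2 _; rewrite e50; lia.
- apply: c74; apply: leq_trans _ h3; rewrite e74; lia.
Qed.

Lemma key m : 40 <= m ->
  16 * (112* m+1) * 'C(74* m,38* m) <= 'C(25* m,13* m) * 'C(50* m,25* m).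
Proof.
move=> hm.
have m0 : 0 < m by lia.
have l1 : 13* m <= 25* m by lia.
have l2 : 25* m <= 50* m by lia.
have l3 : 38* m <= 74* m by lia.
have eh1 : 25* m - 13* m = 12* m by lia.
have eh2 : 50* m - 25* m = 25* m by lia.
have eh3 : 74* m - 38* m = 36* m by lia.
have X0 : 0 < m ^ m by rewrite expn_gt0 m0.
have pc c e : 0 < c -> 0 < (c^e)^m by move=> c0; rewrite !expn_gt0 c0.
have hP := hPL hm.
have h1 := @binL_aux (25* m) (13* m) l1.
have h2 := @binL_aux (50* m) (25* m) l2.
have h3 := @binU (74* m) (38* m) l3.
rewrite eh1 in h1.
rewrite eh2 in h2.
rewrite eh3 in h3.
rewrite (powcm 25 25 m) (powcm 13 13 m) (powcm 12 12 m) in h1.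
rewrite (powcm 50 50 m) (powcm 25 25 m) in h2.
rewrite (powcm 74 74 m) (powcm 38 38 m) (powcm 36 36 m) in h3.
exact: (combine2 X0 (ltn0Sn _) (ltn0Sn _) (pc 13 13 isT) (pc 12 12 isT) (pc 25 25 isT)
   (pc 38 38 isT) (pc 36 36 isT) h1 h2 h3 hP).
Qed.

End NatPart.
Import NatPart.

Module ProbPart.
Import Order.TTheory GRing.Theory Num.Theory.
Local Open Scope ring_scope.

Section Real.
Variable R : realType.

Lemma eqle (x y : R) : x = y -> x <= y. Proof. by move->. Qed.

Lemma bernoulli (a : R) j : 0 <= a -> 1 + j%:R * a <= (1 + a) ^+ j.
Proof.
move=> a0; elim: j => [|j IH]; first by rewrite mul0r addr0 expr0.
rewrite exprS -nat1r.
have h : 0 <= (j%:R : R) by exact: ler0n.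
have hp : 0 <= (1 + a) ^+ j by apply: exprn_ge0; lra.
nra.
Qed.

Lemma powle (a : R) j : 0 <= a -> j%:R * a <= 1/2 -> (1 + a) ^+ j <= 1 + 2 * j%:R * a.
Proof.
move=> a0 ja.
have H : (1 + a) ^+ j * (1 - j%:R * a) <= 1.
  elim: j ja => [|j IH] ja; first by rewrite mul0r subr0 mulr1 expr0.
  have h : 0 <= (j%:R : R) by exact: ler0n.
  have ja' : j%:R * a <= 1/2 by move: ja; rewrite -nat1r => ja; nra.
  have IHj := IH ja'.
  have hp : 0 <= (1 + a) ^+ j by apply: exprn_ge0; lra.
  rewrite exprS -nat1r.
  move: ((1 + a) ^+ j) IHj hp => X IHj hp.
  have hq : 0 <= X * (j%:R * a * a + a * a) by apply: mulr_ge0 => //; nra.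
  nra.
have h : 0 <= (j%:R : R) by exact: ler0n.
have hp : 0 <= (1 + a) ^+ j by apply: exprn_ge0; lra.
have y0 : 0 <= j%:R * a by apply: mulr_ge0.
rewrite -mulrA.
move: ((1 + a) ^+ j) (j%:R * a) H hp y0 ja => X y H hp y0 ja.
have hq1 : 0 <= X * (y * (1 - 2 * y)) by apply: mulr_ge0 => //; apply: mulr_ge0 => //; lra.
have hq2 : 0 <= (1 - X * (1 - y)) * (1 + 2 * y) by apply: mulr_ge0; lra.
nra.
Qed.

Lemma expR_half_ge : 3/2 <= expR (1/2 : R).
Proof. have := expR_ge1Dx (1/2 : R); lra. Qed.

Lemma expR_half_le : expR (1/2 : R) <= 2.
Proof.
have h1 := expR_ge1Dx (- (1/2) : R).
have h2 : expR (- (1/2)) * expR (1/2) = 1 :> R by rewrite -expRD addNr expR0.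
have h3 := expR_gt0 (1/2 : R).
nra.
Qed.

Lemma expR_mhalf_le : expR (- (1/2) : R) <= 2/3.
Proof.
have h1 := expR_half_ge.
have h2 : expR (- (1/2)) * expR (1/2) = 1 :> R by rewrite -expRD addNr expR0.
have h3 := expR_gt0 (- (1/2) : R).
nra.
Qed.

Lemma NUM (d r N : nat) : (0 < d)%N -> (16 * (N+1) * d <= r)%N ->
  (1 - (8*d)%:R^-1) ^+ r + expR ((8*d)%:R^-1 * r%:R) / (1 + (2*d)%:R^-1) ^+ r
   <= 3 * (16/81 : R) ^+ (N+1).
Proof.
move=> d0 hr.
set rho : R := (8*d)%:R^-1; set a : R := (2*d)%:R^-1.
have dR : 0 < (d%:R : R) by rewrite ltr0n.
have rho0 : 0 <= rho by rewrite invr_ge0 ler0n.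
have rho1 : rho <= 1 by rewrite invf_le1 ?ler1n ?ltr0n ?muln_gt0 //; lia.
have a0 : 0 <= a by rewrite invr_ge0 ler0n.
set s := (r %/ (4*d))%N.
have d4 : (0 < 4 * d)%N by lia.
have hs1 : (4*d*s <= r)%N by rewrite mulnC leq_trunc_div.
have hs2 : (r <= 4*d*(s+1))%N by rewrite mulnC addn1 ltnW // ltn_ceil.
have hs3 : (4*(N+1) <= s)%N by rewrite leq_divRL //; nia.
have ha : (1 - rho) ^+ r <= (2/3) ^+ s.
  apply: (le_trans (ler_wiXn2l _ _ hs1)); [lra|lra|].
  apply: (@le_trans _ _ (expR (- rho) ^+ (4*d*s))).
    apply: lerXn2r; rewrite ?nnegrE ?expR_ge0 //; [lra|].
    by have := expR_ge1Dx (- rho); lra.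
  rewrite -expRM_natr.
  have -> : - rho * (4*d*s)%:R = s%:R * (- (1/2)).
    by rewrite /rho !natrM; field; lra.
  rewrite expRM_natl; apply: lerXn2r; rewrite ?nnegrE ?expR_ge0 //; last exact: expR_mhalf_le.
  lra.
have hb : expR (rho * r%:R) / (1 + a) ^+ r <= 2 * (1/2) ^+ s.
  have c0 : 0 < (1 + a) ^+ r by apply: exprn_gt0; lra.
  rewrite ler_pdivrMr //.
  have e1 : expR (rho * r%:R) <= 2 ^+ (s + 1).
    apply: (@le_trans _ _ (expR (rho * (4*d*(s+1))%:R))).
      by rewrite ler_expR; apply: ler_wpM2l => //; rewrite ler_nat.
    have -> : rho * (4*d*(s+1))%:R = (s+1)%:R * (1/2).
      by rewrite /rho !natrM; field; lra.
    rewrite expRM_natl; apply: lerXn2r; rewrite ?nnegrE ?expR_ge0 //; last exact: expR_half_le.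
  have e2 : 2 ^+ (2 * s) <= (1 + a) ^+ r.
    apply: (@le_trans _ _ ((1 + a) ^+ (4*d*s))); last by apply: ler_weXn2l => //; lra.
    have -> : (4 * d * s = (2 * d) * (2 * s))%N by lia.
    rewrite [X in _ <= X]exprM; apply: lerXn2r; rewrite ?nnegrE //; first by apply: exprn_ge0; lra.
    have := bernoulli (2*d) a0.
    have -> : (2*d)%:R * a = 1 by rewrite /a mulfV // pnatr_eq0; lia.
    by [].
  apply: (le_trans e1).
  have y0 : 0 < (2 : R) ^+ s by apply: exprn_gt0.
  have -> : (2 : R) ^+ (s + 1) = 2 * (1/2) ^+ s * 2 ^+ (2 * s).
    rewrite addn1 exprS mul2n -addnn exprD div1r exprVn.
    by field; rewrite gt_eqF.
  apply: ler_wpM2l => //; apply: mulr_ge0 => //; apply: exprn_ge0; lra.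
have hc : (1/2 : R) ^+ s <= (2/3) ^+ s.
  apply: lerXn2r; rewrite ?nnegrE; lra.
have hd : (2/3 : R) ^+ s <= (16/81) ^+ (N+1).
  apply: (le_trans (ler_wiXn2l _ _ hs3)); [lra|lra|].
  rewrite exprM.
  have -> : (2/3 : R) ^+ 4 = 16/81 by rewrite !exprS expr0; field.
  by [].
lra.
Qed.


Lemma auxA (dd y : R) : 0 < dd -> y <= dd -> y * (2 * dd)^-1 <= 1/2.
Proof.
move=> d0 yd; apply: (@le_trans _ _ (dd * (2 * dd)^-1)).
  by apply: ler_wpM2r => //; rewrite invr_ge0; apply: mulr_ge0 => //; exact: ltW.
by apply: eqle; field; rewrite gt_eqF.
Qed.

Lemma auxB (dd y : R) : 0 < dd ->
  1 + (8 * dd)^-1 / dd * y = (8 * dd)^-1 * (1 + 2 * y * (2 * dd)^-1) + (1 - (8 * dd)^-1).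
Proof. by move=> d0; field; rewrite gt_eqF. Qed.

Lemma auxC (dd r : R) : 0 < dd -> (8 * dd)^-1 / dd * (r * dd) = (8 * dd)^-1 * r.
Proof. by move=> d0; field; rewrite gt_eqF. Qed.


Lemma FIN (N : nat) : 3 * (16/81 : R) ^+ (N+1) *+ (4 ^ N) < 1.
Proof.
rewrite -[_ *+ (4 ^ N)]mulr_natr natrX addn1 exprS.
have e : (16/81 : R) ^+ N * 4%:R ^+ N = (64/81) ^+ N.
  by rewrite -exprMn; congr (_ ^+ _); field.
have h : (64/81 : R) ^+ N <= 1 by apply: exprn_ile1; lra.
have -> : 3 * (16/81 * (16/81 : R) ^+ N) * 4%:R ^+ N = 3 * (16/81) * ((16/81)^+N * 4%:R^+N) by ring.
rewrite e; lra.
Qed.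

End Real.

Lemma card_sumP (X : finType) (P Q : pred X) :
  #|[set x | P x && Q x]| = \sum_(x | P x) nat_of_bool (Q x).
Proof.
rewrite -sum1_card (eq_bigl (fun x => P x && Q x)) => [|x]; last by rewrite inE.
by rewrite big_mkcondr /=; apply: eq_bigr => x _; case: (Q x).
Qed.

Section Prob.
Variable R : realType.
Variable T : finType.
Notation FT := {ffun {set T} -> bool}.

Lemma prodsum (h : {set T} -> bool -> R) :
  \sum_(f : FT) \prod_S h S (f S) = \prod_S (h S true + h S false).
Proof. by rewrite -bigA_distr_bigA; apply: eq_bigr => S _; rewrite big_bool. Qed.

Definition wt (rho : R) (f : FT) := \prod_S (if f S then rho else 1 - rho).

Lemma wt_ge0 rho f : 0 <= rho -> rho <= 1 -> 0 <= wt rho f.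
Proof. move=> h0 h1; apply: prodr_ge0 => S _; case: (f S) => //; lra. Qed.

Lemma wt_sum rho : \sum_f wt rho f = 1.
Proof.
rewrite /wt (prodsum (fun S b => if b then rho else 1 - rho)) /=.
by apply: big1 => S _; rewrite addrC subrK.
Qed.

Lemma L3 rho (Rf : {set {set T}}) :
  \sum_f wt rho f * (nat_of_bool [forall S in Rf, ~~ f S])%:R = (1 - rho) ^+ #|Rf|.
Proof.
have -> : \sum_f wt rho f * (nat_of_bool [forall S in Rf, ~~ f S])%:R =
   \sum_(f : FT) \prod_S (fun S b => if b then (if S \in Rf then 0 else rho) else 1 - rho) S (f S).
  apply: eq_bigr => f _ /=.
  case: (boolP [forall S in Rf, ~~ f S]) => H /=.
    rewrite mulr1 /wt; apply: eq_bigr => S _.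
    move/forallP: H => /(_ S) /implyP.
    by case: (f S); case: (S \in Rf) => // /(_ isT).
  rewrite mulr0; move/forallPn: H => [S]; rewrite negb_imply negbK => /andP[SR fS].
  by rewrite (bigD1 S) //= fS SR mul0r.
rewrite (prodsum (fun S b => if b then (if S \in Rf then 0 else rho) else 1 - rho)).
rewrite -prodr_const [RHS]big_mkcond /=.
by apply: eq_bigr => S _; case: (S \in Rf); rewrite ?add0r // addrC subrK.
Qed.


Section L4.
Variables (k d : nat) (Rf : {set {set T}}).
Hypothesis d0 : (0 < d)%N.
Hypothesis Rk : forall U, U \in Rf -> #|U| = k.
Hypothesis hd : forall X : {set T}, #|X| = k ->
  (#|[set Y : {set T} | (#|Y| == k) && [disjoint Y & X]]| <= d)%N.

Let rho : R := (8 * d)%:R^-1.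
Let a : R := (2 * d)%:R^-1.

Definition bad4 (f : FT) := [forall U in Rf, [exists S : {set T}, [&& f S, #|S| == k & [disjoint S & U]]]].

Let deg (S : {set T}) := #|[set U | (U \in Rf) && [disjoint S & U]]|.

Lemma deg_le (S : {set T}) : #|S| = k -> (deg S <= d)%N.
Proof.
move=> kS; apply: leq_trans (hd kS); apply: subset_leq_card; apply/subsetP => U.
rewrite !inE => /andP[UR dSU]; by rewrite (Rk UR) eqxx disjoint_sym.
Qed.

Lemma sum_deg : (\sum_(S : {set T} | #|S| == k) deg S <= #|Rf| * d)%N.
Proof.
rewrite /deg; under eq_bigr => S _ do rewrite (card_sumP (mem Rf)).
rewrite exchange_big /= -sum_nat_const; apply: leq_sum => U UR.
rewrite -(card_sumP (fun S : {set T} => #|S| == k)); apply: leq_trans (hd (Rk UR)).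
by apply: subset_leq_card; apply/subsetP => Y; rewrite !inE.
Qed.

Lemma L4 : \sum_f wt rho f * (nat_of_bool (bad4 f))%:R <= expR (rho * #|Rf|%:R) / (1 + a) ^+ #|Rf|.
Proof.
have dR : 0 < (d%:R : R) by rewrite ltr0n.
have rho0 : 0 <= rho by rewrite invr_ge0 ler0n.
have rho1 : rho <= 1 by rewrite invf_le1 ?ler1n ?ltr0n ?muln_gt0 //; lia.
have a0 : 0 <= a by rewrite invr_ge0 ler0n.
pose z (S : {set T}) : R := if #|S| == k then (1 + a) ^+ deg S else 1.
have z0 S : 0 <= z S by rewrite /z; case: ifP => // _; apply: exprn_ge0; lra.
pose Z (f : FT) := \prod_S (if f S then z S else 1).
have Z0 f : 0 <= Z f by apply: prodr_ge0 => S _; case: (f S).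
have c0 : 0 < (1 + a) ^+ #|Rf| by apply: exprn_gt0; lra.
have st1 f : wt rho f * (nat_of_bool (bad4 f))%:R <= wt rho f * Z f / (1 + a) ^+ #|Rf|.
  have w0 := wt_ge0 f rho0 rho1.
  case: (boolP (bad4 f)) => H /=; last first.
    by rewrite mulr0; apply: divr_ge0 => //; [apply: mulr_ge0 | apply: ltW].
  rewrite -mulrA; apply: ler_wpM2l => //.
  rewrite ler_pdivlMr // mul1r.
  have -> : Z f = \prod_(S | f S && (#|S| == k)) (1 + a) ^+ deg S.
    rewrite [RHS]big_mkcond; apply: eq_bigr => S _ /=; rewrite /z.
    by case: (f S); case: (#|S| == k).
  rewrite prodrXr; apply: ler_weXn2l; first by rewrite lerDl.
  rewrite /deg; under eq_bigr => S _ do rewrite (card_sumP (mem Rf)).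
  rewrite exchange_big /= -sum1_card; apply: leq_sum => U UR.
  move/forallP: H => /(_ U) /implyP /(_ UR) /existsP [S /and3P [fS kS dSU]].
  by rewrite (bigD1 S) /= ?fS ?kS // dSU.
have st2 : \sum_f wt rho f * Z f = \prod_S (rho * z S + (1 - rho)).
  rewrite -(prodsum (fun S b => if b then rho * z S else 1 - rho)).
  apply: eq_bigr => f _; rewrite /wt /Z -big_split; apply: eq_bigr => S _ /=.
  by case: (f S); rewrite ?mulr1.
pose dg (S : {set T}) := if #|S| == k then deg S else 0%N.
have st3 : \prod_S (rho * z S + (1 - rho)) <= expR (rho * #|Rf|%:R).
  apply: (@le_trans _ _ (\prod_S expR (rho / d%:R * (dg S)%:R))).
    apply: ler_prod => S _; apply/andP; split.
      by apply: addr_ge0; [apply: mulr_ge0 | rewrite subr_ge0].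
    rewrite /z /dg; case: ifP => kS; last by rewrite mulr0 expR0 mulr1 addrC subrK.
    have dl := deg_le (eqP kS).
    have dlR : (deg S)%:R <= (d%:R : R) by rewrite ler_nat.
    have hp : (1 + a) ^+ deg S <= 1 + 2 * (deg S)%:R * a.
      apply: powle => //; rewrite /a natrM; exact: auxA.
    apply: le_trans (expR_ge1Dx _).
    have -> : 1 + rho / d%:R * (deg S)%:R = rho * (1 + 2 * (deg S)%:R * a) + (1 - rho).
      by rewrite /a /rho !natrM; exact: auxB.
    by rewrite lerD2r; apply: ler_wpM2l.
  rewrite -expR_sum ler_expR -mulr_sumr -natr_sum.
  have hs : (\sum_S dg S <= #|Rf| * d)%N.
    by rewrite /dg -big_mkcond /=; exact: sum_deg.
  have hsR : (\sum_S dg S)%:R <= (#|Rf|%:R * d%:R : R) by rewrite -natrM ler_nat.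
  apply: (@le_trans _ _ (rho / d%:R * (#|Rf|%:R * d%:R))).
    apply: ler_wpM2l => //; apply: divr_ge0 => //; exact: ltW.
  by apply: eqle; rewrite /rho natrM; exact: auxC.
apply: (@le_trans _ _ (\sum_f wt rho f * Z f / (1 + a) ^+ #|Rf|)).
  by apply: ler_sum => f _; exact: st1.
rewrite -mulr_suml st2; apply: ler_wpM2r; last exact: st3.
by rewrite invr_ge0 ltW.
Qed.
End L4.


Lemma card_setT : #|{set T}| = (2 ^ #|T|)%N.
Proof. by rewrite -[#|{set T}|]cardsT -powersetT card_powerset cardsT. Qed.

Lemma prob_main (k d : nat) (V : {set {set T} * {set T}})
  (Rf : {set T} * {set T} -> {set {set T}}) :
  (0 < d)%N ->
  (forall p, p \in V -> forall U, U \in Rf p -> #|U| = k) ->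
  (forall X : {set T}, #|X| = k ->
     (#|[set Y : {set T} | (#|Y| == k) && [disjoint Y & X]]| <= d)%N) ->
  (forall p, p \in V -> (16 * (#|T| + 1) * d <= #|Rf p|)%N) ->
  exists f : FT, forall p, p \in V ->
    ~~ [forall S in Rf p, ~~ f S] && ~~ bad4 k (Rf p) f.
Proof.
move=> d0 Rk hd hr.
case: (boolP [exists f : FT, [forall p in V, ~~ [forall S in Rf p, ~~ f S] && ~~ bad4 k (Rf p) f]]).
  move/existsP => [f /forallP Hf]; exists f => p pV.
  by have /implyP := Hf p; apply.
move=> Hn; exfalso.
pose rho : R := (8*d)%:R^-1.
have rho0 : 0 <= rho by rewrite invr_ge0 ler0n.
have rho1 : rho <= 1 by rewrite invf_le1 ?ler1n ?ltr0n ?muln_gt0 //; lia.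
have keyf (f : FT) : wt rho f <= \sum_(p in V)
    (wt rho f * (nat_of_bool [forall S in Rf p, ~~ f S])%:R
     + wt rho f * (nat_of_bool (bad4 k (Rf p) f))%:R).
  move: Hn; rewrite negb_exists => /forallP /(_ f) /forallPn [p].
  rewrite negb_imply => /andP[pV]; rewrite negb_and !negbK => Hb.
  have w0 := wt_ge0 f rho0 rho1.
  rewrite (bigD1 p) //=.
  have s0 : 0 <= \sum_(q in V | q != p)
    (wt rho f * (nat_of_bool [forall S in Rf q, ~~ f S])%:R
     + wt rho f * (nat_of_bool (bad4 k (Rf q) f))%:R).
    by apply: sumr_ge0 => q _; apply: addr_ge0; apply: mulr_ge0.
  case/orP: Hb => H; rewrite H /= mulr1.
    by rewrite -addrA lerDl; apply: addr_ge0 => //; apply: mulr_ge0.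
  by rewrite -addrA addrC -addrA lerDl; apply: addr_ge0 => //; apply: mulr_ge0.
have tot : 1 <= \sum_(p in V) (3 * (16/81 : R) ^+ (#|T|+1)).
  rewrite -{1}(wt_sum rho); apply: le_trans (ler_sum _ (fun f _ => keyf f)) _.
  rewrite exchange_big /=; apply: ler_sum => p pV.
  rewrite big_split /= L3.
  apply: le_trans (lerD (lexx _) (@L4 k d (Rf p) d0 (Rk p pV) hd)) _.
  exact: NUM d0 (hr p pV).
rewrite sumr_const in tot.
have hV : (#|V| <= 4 ^ #|T|)%N.
  apply: leq_trans (max_card _) _; rewrite card_prod card_setT -expnMn.
  by [].
have : 1 < 1 :> R.
  apply: le_lt_trans tot _; apply: le_lt_trans (FIN R #|T|).
  apply: ler_wpMn2l => //; apply: mulr_ge0 => //; apply: exprn_ge0.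
  by apply: divr_ge0; apply: ler0n.
by rewrite ltxx.
Qed.

End Prob.

End ProbPart.
Import ProbPart.


Section Assembly.
Variable m : nat.
Hypothesis hm : 40 <= m.
Notation T := 'I_(NN m).

Definition VV : {set {set T} * {set T}} :=
  [set p : {set T} * {set T} | [&& [disjoint p.1 & p.2], #|p.1| == halfn m & #|p.2| == nn m]].

Definition RR (p : {set T} * {set T}) : {set {set T}} :=
  [set q.1 :|: q.2 | q in setX [set X : {set T} | X \subset p.1 & #|X| == 13 * m]
                               [set Y : {set T} | Y \subset p.2 & #|Y| == 25 * m]].

Lemma cardT : #|T| = 112 * m. Proof. by rewrite card_ord. Qed.

Lemma RR_mem p U : p \in VV -> U \in RR p ->
  [/\ #|U| = Ssize m, U \subset p.1 :|: p.2 & #|p.2 :&: U| = 25 * m].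
Proof.
rewrite inE => /and3P[dis _ _] /imsetP[[X Y]]; rewrite inE /= !inE.
move=> /andP[/andP[XA Xk] /andP[YB Yk]] ->.
have dXY : [disjoint X & Y].
  exact: (disjointW XA YB dis).
have eB : p.2 :&: (X :|: Y) = Y.
  apply/setP => x; rewrite !inE; case xY: (x \in Y); first by rewrite (subsetP YB) ?orbT.
  rewrite orbF andbC; case xX: (x \in X) => //=.
  apply/negP => xB; move: dis; rewrite disjoint_subset => /subsetP /(_ x (subsetP XA x xX)).
  by rewrite inE xB.
split.
- rewrite cardsU (eqP Xk) (eqP Yk); move: dXY; rewrite -setI_eq0 => /eqP ->; rewrite cards0 /Ssize; lia.
- exact: setUSS.
- by rewrite eB (eqP Yk).
Qed.

Lemma RR_card p : p \in VV -> #|RR p| = 'C(25* m, 13* m) * 'C(50* m, 25* m).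
Proof.
rewrite inE => /and3P[dis /eqP cA /eqP cB].
rewrite card_in_imset; last first.
  move=> [X Y] [X' Y']; rewrite !inE /= => /andP[/andP[XA _] /andP[YB _]] /andP[/andP[XA' _] /andP[YB' _]] /= e.
  have hX : forall Z W : {set T}, Z \subset p.1 -> W \subset p.2 -> (Z :|: W) :&: p.1 = Z.
    move=> Z W ZA WB; apply/setP => x; rewrite !inE.
    case xZ: (x \in Z); first by rewrite (subsetP ZA).
    case xW: (x \in W) => //=; apply/negP => xA.
    by move: dis; rewrite disjoint_subset => /subsetP /(_ x xA); rewrite inE (subsetP WB).
  have hY : forall Z W : {set T}, Z \subset p.1 -> W \subset p.2 -> (Z :|: W) :&: p.2 = W.
    move=> Z W ZA WB; apply/setP => x; rewrite !inE.
    case xW: (x \in W); first by rewrite (subsetP WB) ?orbT ?andbT.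
    rewrite orbF; case xZ: (x \in Z) => //=; apply/negP => xB.
    by move: dis; rewrite disjoint_subset => /subsetP /(_ x (subsetP ZA x xZ)); rewrite inE xB.
  by congr pair; [rewrite -(hX X Y XA YB) e (hX X' Y' XA' YB') | rewrite -(hY X Y XA YB) e (hY X' Y' XA' YB')].
by rewrite cardsX !cards_draws cA cB.
Qed.

Lemma hd_RR (X : {set T}) : #|X| = Ssize m ->
  #|[set Y : {set T} | (#|Y| == Ssize m) && [disjoint Y & X]]| <= 'C(74* m, 38* m).
Proof.
move=> cX.
have -> : [set Y : {set T} | (#|Y| == Ssize m) && [disjoint Y & X]] =
          [set Y : {set T} | Y \subset ~: X & #|Y| == Ssize m].
  by apply/setP => Y; rewrite !inE disjoints_subset andbC.
rewrite cards_draws.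
have : #|X| + #|~: X| = #|T| := cardsC X.
rewrite cardT cX /Ssize => h.
have -> : #|~: X| = 74 * m by lia.
by [].
Qed.

End Assembly.

Theorem lemma18 :
  exists m0 : nat, forall m : nat, m0 <= m ->
  exists (SS TT : {set {set 'I_(NN m)}}),
    (* (i) *)
    (forall S, S \in SS -> #|S| = Ssize m) /\
    (forall T, T \in TT -> #|T| = Tsize m) /\
    (* (ii) *)
    (forall S T, S \in SS -> T \in TT -> ~~ (S \subset T) /\ ~~ (T \subset S)) /\
    (* (iii) *)
    (forall A B : {set 'I_(NN m)}, [disjoint A & B] ->
       #|A| = halfn m -> #|B| = nn m ->
       exists2 S, S \in SS & (S \subset A :|: B) /\ #|B :&: S| <= halfn m) /\
    (* (iv) *)
    (forall A B : {set 'I_(NN m)}, [disjoint A & B] ->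
       #|A| = halfn m -> #|B| = nn m ->
       exists2 T, T \in TT & (~: (A :|: B) \subset T) /\ #|B :\: T| <= halfn m).
Proof.
exists 40 => m hm.
have d0 : 0 < 'C(74* m, 38* m) by rewrite bin_gt0; lia.
have Rk : forall p, p \in VV m -> forall U, U \in RR p -> #|U| = Ssize m.
  by move=> p pV U UR; case: (RR_mem hm pV UR).
have hr : forall p, p \in VV m -> 16 * (#|'I_(NN m)| + 1) * 'C(74* m,38* m) <= #|RR p|.
  by move=> p pV; rewrite (RR_card pV) cardT; exact: key hm.
have [f Hf] := prob_main (Rdefinitions.R : realType) d0 Rk (@hd_RR m hm) hr.
pose SS := [set S : {set 'I_(NN m)} | f S & #|S| == Ssize m].
pose TT := [set ~: U | U in [set U : {set 'I_(NN m)} |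
                 (#|U| == Ssize m) && [forall S in SS, ~~ [disjoint S & U]]]].
have cC : forall U : {set 'I_(NN m)}, #|U| = Ssize m -> #|~: U| = Tsize m.
  move=> U cU; have := cardsC U; rewrite cardT cU /Ssize /Tsize; lia.
exists SS, TT; split; [|split; [|split; [|split]]].
- by move=> S; rewrite inE => /andP[_ /eqP].
- by move=> T /imsetP[U]; rewrite inE => /andP[/eqP cU _] ->; exact: cC.
- move=> S T; rewrite inE => /andP[fS /eqP cS] /imsetP[U]; rewrite inE => /andP[/eqP cU H] ->.
  split.
    rewrite -disjoints_subset; move/forallP: H => /(_ S) /implyP; apply.
    by rewrite inE fS cS eqxx.
  apply/negP => /subset_leq_card; rewrite (cC U cU) cS /Tsize /Ssize; lia.
- move=> A B dis cA cB.
  have pV : (A, B) \in VV m by rewrite inE /= dis cA cB !eqxx.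
  have /andP[H3 _] := Hf _ pV.
  move/forallPn: H3 => [S]; rewrite negb_imply negbK => /andP[SR fS].
  case: (RR_mem hm pV SR) => /= cS sub cBS.
  exists S; first by rewrite inE fS cS eqxx.
  by rewrite sub cBS /halfn.
- move=> A B dis cA cB.
  have pV : (A, B) \in VV m by rewrite inE /= dis cA cB !eqxx.
  have /andP[_ H4] := Hf _ pV.
  move: H4; rewrite /bad4 => /forallPn [U]; rewrite negb_imply => /andP[UR].
  rewrite negb_exists => /forallP HU.
  case: (RR_mem hm pV UR) => /= cU sub cBU.
  exists (~: U).
    apply: imset_f; rewrite inE cU eqxx /=; apply/forallP => S; apply/implyP.
    rewrite inE => /andP[fS cS]; have := HU S; by rewrite fS cS.
  by rewrite setCS sub setDE setCK cBU /halfn.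
Qed.
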